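(* Let $X\in\mathbb{R}^{n\times d}$, $y\in\mathbb{R}^n$, and let $g:\mathbb{R}^d\to(-\infty,\infty]$ be a proper lower semicontinuous convex function with $g(k\beta)=kg(\beta)$ for all $k\ge0$, $\beta\in\mathbb{R}^d$, such that there exists $\beta\in\mathrm{relint}(\mathrm{dom}(g))$ and $P(\beta):=\frac12\|y-X\beta\|_2^2+g(\beta)$ attains its infimum. Let $f(z)=\frac12\|y-z\|_2^2$, so $-f^\star(-\theta)=-\frac12\|\theta\|_2^2+y^\top\theta$, let $D(\theta)=-f^\star(-\theta)-g^\star(X^\top\theta)$, and let $\hat\theta$ be a maximizer of $D$. For $\tilde\beta\in\mathbb{R}^d$ define \[ u^{\mathrm{GM}}(\theta;\tilde\beta)=\begin{cases}-f^\star(-\theta) & \text{if } -f^\star(-\theta)\le P(\tilde\beta),\\ -\infty & \text{if } -f^\star(-\theta)>P(\tilde\beta).\end{cases} \] Then for all $\tilde\beta\in\mathbb{R}^d$, $\tilde\theta\in\mathrm{dom}(D)$ and $\theta\in\mathbb{R}^n$ we have $D(\theta)\le u^{\mathrm{GM}}(\theta;\tilde\beta)$, and hence \[ \hat\theta\in\{\theta\mid l(\theta;\tilde\theta)\le u^{\mathrm{GM}}(\theta;\tilde\beta)\}=\{\theta\mid -f^\star(-\theta)\le P(\tilde\beta)\ \land\ (\tilde\theta-\theta)^\top(y-\theta)\le0\}, \] where $l(\theta;\tilde\theta)=\frac12\|\theta-\tilde\theta\|_2^2+D(\tilde\theta)$.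
   Context: $h^\star(v)=\sup_z v^\top z-h(z)$ is the Fenchel conjugate; $\mathrm{dom}(h)=\{z:|h(z)|<\infty\}$; $\mathrm{relint}$ is relative interior. *)

(* Defs.v *)
From HB Require Import structures.
From mathcomp Require Import all_boot all_order all_algebra.
From mathcomp Require Import all_classical all_reals all_analysis.
Set Implicit Arguments. Unset Strict Implicit. Unset Printing Implicit Defensive.
Import Order.TTheory GRing.Theory Num.Theory.
Import numFieldNormedType.Exports.
Local Open Scope classical_set_scope.
Local Open Scope ring_scope.

Section Defs.
Context {R : realType}.

Definition dotv {n : nat} (u v : 'cV[R]_n) : R := \sum_(i < n) u i 0 * v i 0.
Definition sqnorm2 {n : nat} (u : 'cV[R]_n) : R := dotv u u.

Definition fenchel {n : nat} (h : 'cV[R]_n -> \bar R) (v : 'cV[R]_n) : \bar R :=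
  ereal_sup [set ((dotv v z)%:E - h z)%E | z in [set: 'cV[R]_n]].

Definition edom {n : nat} (h : 'cV[R]_n -> \bar R) : set 'cV[R]_n :=
  [set z | h z \is a fin_num].

Definition proper_fun {n : nat} (h : 'cV[R]_n -> \bar R) : Prop :=
  (forall z, h z != -oo%E) /\ (exists z, h z \is a fin_num).

Definition convex_efun {n : nat} (h : 'cV[R]_n -> \bar R) : Prop :=
  forall (x y : 'cV[R]_n) (t : R), 0 <= t <= 1 ->
    (h (t *: x + (1 - t) *: y)%R <= t%:E * h x + (1 - t)%:E * h y)%E.

Definition affine_hull {n : nat} (C : set 'cV[R]_n) : set 'cV[R]_n :=
  [set x | exists (m : nat) (w : 'I_m -> R) (p : 'I_m -> 'cV[R]_n),
      (forall i, C (p i)) /\ \sum_(i < m) w i = 1 /\ x = \sum_(i < m) w i *: p i].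

Definition relint {n : nat} (C : set 'cV[R]_n) : set 'cV[R]_n :=
  [set x | C x /\ exists2 e : R, 0 < e &
      forall z, ball x e z -> affine_hull C z -> C z].

End Defs.

(* Main.v *)
Require Import Defs.
From HB Require Import structures.
From mathcomp Require Import all_boot all_order all_algebra.
From mathcomp Require Import all_classical all_reals all_analysis.
From mathcomp Require Import ring lra.
Import Order.TTheory GRing.Theory Num.Theory.
Import numFieldNormedType.Exports.
Local Open Scope classical_set_scope.
Local Open Scope ring_scope.
Section H.
Context {R : realType}.

Lemma dotvC {n} (u v : 'cV[R]_n) : dotv u v = dotv v u.
Proof. by apply: eq_bigr => i _; rewrite mulrC. Qed.

Lemma dotvDl {n} (u v w : 'cV[R]_n) : dotv (u + v) w = dotv u w + dotv v w.
Proof. by rewrite /dotv -big_split; apply: eq_bigr => i _; rewrite mxE mulrDl. Qed.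

Lemma dotvZl {n} a (u w : 'cV[R]_n) : dotv (a *: u) w = a * dotv u w.
Proof. by rewrite /dotv mulr_sumr; apply: eq_bigr => i _; rewrite mxE mulrA. Qed.

Lemma dotvNl {n} (u w : 'cV[R]_n) : dotv (- u) w = - dotv u w.
Proof. by rewrite /dotv -sumrN; apply: eq_bigr => i _; rewrite mxE mulNr. Qed.

Lemma dotvBl {n} (u v w : 'cV[R]_n) : dotv (u - v) w = dotv u w - dotv v w.
Proof. by rewrite dotvDl dotvNl. Qed.

Lemma dotvDr {n} (u v w : 'cV[R]_n) : dotv w (u + v) = dotv w u + dotv w v.
Proof. by rewrite !(dotvC w) dotvDl. Qed.

Lemma dotvZr {n} a (u w : 'cV[R]_n) : dotv w (a *: u) = a * dotv w u.
Proof. by rewrite !(dotvC w) dotvZl. Qed.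

Lemma dotvNr {n} (u w : 'cV[R]_n) : dotv w (- u) = - dotv w u.
Proof. by rewrite !(dotvC w) dotvNl. Qed.

Lemma dotvBr {n} (u v w : 'cV[R]_n) : dotv w (u - v) = dotv w u - dotv w v.
Proof. by rewrite dotvDr dotvNr. Qed.

Lemma dotv0r {n} (u : 'cV[R]_n) : dotv u 0 = 0.
Proof. by rewrite /dotv big1 // => i _; rewrite mxE mulr0. Qed.

Lemma sqnorm2_ge0 {n} (u : 'cV[R]_n) : 0 <= sqnorm2 u.
Proof. by apply: sumr_ge0 => i _; rewrite -expr2 sqr_ge0. Qed.

Lemma sqnormD {n} (u w : 'cV[R]_n) :
  sqnorm2 (u + w) = sqnorm2 u + 2 * dotv u w + sqnorm2 w.
Proof. rewrite /sqnorm2 dotvDl !dotvDr (dotvC w u); ring. Qed.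

Lemma sqnormN {n} (u : 'cV[R]_n) : sqnorm2 (- u) = sqnorm2 u.
Proof. by rewrite /sqnorm2 dotvNl dotvNr opprK. Qed.

Lemma sqnormZ {n} a (u : 'cV[R]_n) : sqnorm2 (a *: u) = a ^+ 2 * sqnorm2 u.
Proof. by rewrite /sqnorm2 dotvZl dotvZr mulrA expr2. Qed.

Lemma dotv_mul {n d} (X : 'M[R]_(n, d)) th b :
  dotv th (X *m b) = dotv (X^T *m th) b.
Proof.
rewrite /dotv.
under eq_bigr do rewrite mxE big_distrr.
under [RHS]eq_bigr do rewrite mxE big_distrl.
rewrite exchange_big; apply: eq_bigr => j _; apply: eq_bigr => i _.
rewrite /= mxE; ring.
Qed.

Definition qf {n} (y th : 'cV[R]_n) := - (2^-1 * sqnorm2 th) + dotv y th.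

Lemma qfD {n} (y u w : 'cV[R]_n) :
  qf y (u + w) = qf y u + dotv (y - u) w - 2^-1 * sqnorm2 w.
Proof. rewrite /qf sqnormD dotvDr dotvBl; lra. Qed.

Lemma fenchel_sq {n} (y th : 'cV[R]_n) :
  (- fenchel (fun z => (2^-1 * sqnorm2 (y - z))%:E) (- th))%E = (qf y th)%:E.
Proof.
suff -> : fenchel (fun z => (2^-1 * sqnorm2 (y - z))%:E) (- th) =
          (2^-1 * sqnorm2 th - dotv th y)%:E.
  by rewrite -EFinN /qf dotvC; congr EFin; lra.
apply/eqP; rewrite eq_le; apply/andP; split.
- apply: ge_ereal_sup => _ [z _ <-].
  rewrite -EFinB lee_fin.
  have H a : dotv (- th) (y - a) - 2^-1 * sqnorm2 a <= 2^-1 * sqnorm2 th - dotv th y.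
    have := sqnorm2_ge0 (th - a).
    rewrite sqnormD sqnormN dotvNl dotvBr dotvNr; lra.
  by have := H (y - z); rewrite subKr.
- apply: ereal_sup_ubound; exists (y - th) => //=.
  rewrite subKr -EFinB; congr EFin.
  rewrite dotvNl dotvBr; rewrite /sqnorm2; lra.
Qed.

Section G.
Variables (d : nat) (g : 'cV[R]_d -> \bar R).
Hypothesis gN : forall z, g z != -oo%E.
Hypothesis g_hom : forall (k : R) (b : 'cV[R]_d), 0 <= k -> g (k *: b) = (k%:E * g b)%E.

Lemma g0 : g 0 = 0%E.
Proof. by have := (@g_hom 0 0 (lexx 0)); rewrite scale0r mul0e. Qed.

Lemma gstar_ge0 v : (0 <= fenchel g v)%E.
Proof.
apply: le_trans (ereal_sup_ubound _); last by exists 0.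
by rewrite g0 dotv0r sube0.
Qed.

Lemma gstar_le0P v : (fenchel g v <= 0)%E <-> (forall z, ((dotv v z)%:E <= g z)%E).
Proof.
split.
- move=> H z.
  have H1 : ((dotv v z)%:E - g z <= 0)%E.
    by apply: le_trans H; apply: ereal_sup_ubound; exists z.
  move: H1 (gN z); case: (g z) => [r| |] //=.
  by rewrite -EFinB !lee_fin subr_le0.
  by move=> _; rewrite leey.
- move=> H; apply: ge_ereal_sup => _ [z _ <-].
  move: (H z) (gN z); case: (g z) => [r| |] //=.
  - by rewrite -EFinB !lee_fin subr_le0.
  - by move=> _ _; rewrite leNye.
Qed.

Lemma gstar_cases v : fenchel g v = 0%E \/ fenchel g v = +oo%E.
Proof.
have h0 := gstar_ge0 v.
case E: (fenchel g v) => [s| |]; [left | by right | by rewrite E in h0].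
have hs : 0 <= s by rewrite E lee_fin in h0.
suff : (fenchel g v <= 0)%E by rewrite E lee_fin => hs'; congr EFin; apply/eqP; rewrite eq_le hs hs'.
apply/gstar_le0P => z.
move: (gN z); case Eg: (g z) => [r| |] // _; last by rewrite leey.
rewrite lee_fin leNgt; apply/negP => hlt.
set c := dotv v z - r.
have hc : 0 < c by rewrite /c subr_gt0.
set k := (s + 1) / c.
have hk : 0 <= k by rewrite /k; apply: divr_ge0; [lra | exact: ltW].
have hkc : k * c = s + 1 by rewrite /k divfK // gt_eqF.
have : ((dotv v (k *: z))%:E - g (k *: z) <= fenchel g v)%E.
  by apply: ereal_sup_ubound; exists (k *: z).
rewrite E g_hom // Eg dotvZr -EFinM -EFinB lee_fin.
have -> : k * dotv v z - k * r = k * c by rewrite /c mulrBr.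
rewrite hkc; lra.
Qed.

End G.
End H.
Arguments g0 {R d g}.
Arguments gstar_ge0 {R d g}.
Arguments gstar_le0P {R d g}.
Arguments gstar_cases {R d g}.

Theorem theorem9 (R : realType) (n d : nat) (X : 'M[R]_(n, d)) (y : 'cV[R]_n)
  (g : 'cV[R]_d -> \bar R)
  (g_proper : proper_fun g)
  (g_lsc : lower_semicontinuous g)
  (g_convex : convex_efun g)
  (g_hom : forall (k : R) (b : 'cV[R]_d), 0 <= k -> g (k *: b) = (k%:E * g b)%E)
  (g_relint : exists b, relint (edom g) b)
  (P_attains : exists b0, forall b : 'cV[R]_d,
      ((2^-1 * sqnorm2 (y - X *m b0))%:E + g b0 <=
       (2^-1 * sqnorm2 (y - X *m b))%:E + g b)%E)
  (thetahat : 'cV[R]_n) :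
  let P := fun b : 'cV[R]_d => ((2^-1 * sqnorm2 (y - X *m b))%:E + g b)%E in
  let f := fun z : 'cV[R]_n => (2^-1 * sqnorm2 (y - z))%:E in
  let D := fun th : 'cV[R]_n => (- fenchel f (- th) - fenchel g (X^T *m th))%E in
  (forall th, (D th <= D thetahat)%E) ->
  let uGM := fun (th : 'cV[R]_n) (bt : 'cV[R]_d) =>
    if (- fenchel f (- th) <= P bt)%E then (- fenchel f (- th))%E else -oo%E in
  let l := fun th tht : 'cV[R]_n => ((2^-1 * sqnorm2 (th - tht))%:E + D tht)%E in
  forall (bt : 'cV[R]_d) (tht : 'cV[R]_n), edom D tht ->
    (forall th, (D th <= uGM th bt)%E) /\
    [set th | (l th tht <= uGM th bt)%E] thetahat /\
    [set th | (l th tht <= uGM th bt)%E] =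
    [set th | (- fenchel f (- th) <= P bt)%E /\ dotv (tht - th) (y - th) <= 0].
Proof.
move=> P f D hmax uGM l bt tht htht.
have gN := g_proper.1.
have hq th : (- fenchel f (- th))%E = (qf y th)%:E by exact: fenchel_sq.
have hD th : D th = ((qf y th)%:E - fenchel g (X^T *m th))%E by rewrite /D hq.
have gc th := gstar_cases gN g_hom (X^T *m th).
have D0 th : fenchel g (X^T *m th) = 0%E -> D th = (qf y th)%:E.
  by move=> h; rewrite hD h sube0.
have Doo th : fenchel g (X^T *m th) = +oo%E -> D th = -oo%E.
  by move=> h; rewrite hD h.
have wd th : fenchel g (X^T *m th) = 0%E -> forall b, ((qf y th)%:E <= P b)%E.
  move=> h b.
  have hz := (gstar_le0P gN (X^T *m th)).1 (ltac:(by rewrite h)) b.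
  rewrite -dotv_mul in hz.
  rewrite /P; move: hz (gN b); case: (g b) => [r| |] //=.
  - rewrite lee_fin -EFinD lee_fin => hz _.
    have := sqnorm2_ge0 (y - X *m b - th).
    rewrite sqnormD sqnormN dotvNr dotvBl (dotvC (X *m b)) /qf (dotvC y th); lra.
  - by move=> _ _; rewrite leey.
have part1 th : (D th <= uGM th bt)%E.
  rewrite /uGM hq; case: ifP => hle.
  - case: (gc th) => h; first by rewrite D0.
    by rewrite Doo // leNye.
  - case: (gc th) => h; last by rewrite Doo.
    by have := wd th h bt; rewrite hle.
have Gtht : fenchel g (X^T *m tht) = 0%E.
  case: (gc tht) => // h; move: htht; rewrite /edom /= Doo //.
have Dtht := D0 _ Gtht.
have Ghat : fenchel g (X^T *m thetahat) = 0%E.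
  case: (gc thetahat) => // h; have := hmax tht; rewrite (Doo thetahat h) Dtht.
  by rewrite leeNy_eq.
have Dhat := D0 _ Ghat.
set w := tht - thetahat.
have Gt t : 0 <= t <= 1 -> fenchel g (X^T *m (thetahat + t *: w)) = 0%E.
  move=> /andP[t0 t1].
  apply/eqP; rewrite eq_le (gstar_ge0 g_hom) andbT.
  apply/(gstar_le0P gN) => z; rewrite -dotv_mul.
  have h0 := (gstar_le0P gN (X^T *m thetahat)).1 (ltac:(by rewrite Ghat)) z.
  have h1 := (gstar_le0P gN (X^T *m tht)).1 (ltac:(by rewrite Gtht)) z.
  rewrite -dotv_mul in h0; rewrite -dotv_mul in h1.
  move: h0 h1 (gN z); case: (g z) => [r| |] //=; last by move=> *; rewrite leey.
  rewrite !lee_fin /w dotvDl dotvZl dotvBl => h0 h1 _; nra.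
set a := dotv (y - thetahat) w.
set c := sqnorm2 w.
have hc : 0 <= c by exact: sqnorm2_ge0.
have ht : forall s, 0 < s <= 1 -> s * a - 2^-1 * (s ^+ 2 * c) <= 0.
  move=> s /andP[s0 s1].
  have := hmax (thetahat + s *: w).
  rewrite D0; last by apply: Gt; rewrite s1 ltW.
  rewrite Dhat lee_fin qfD dotvZr sqnormZ -/a -/c; lra.
have ha : a <= 0.
  rewrite leNgt; apply/negP => ha.
  set t := a / (a + c).
  have hac : 0 < a + c by lra.
  have htac : t * (a + c) = a by rewrite /t divfK // gt_eqF.
  have t0 : 0 < t by rewrite /t divr_gt0.
  have t1 : t <= 1 by rewrite /t ler_pdivrMr // mul1r; lra.
  have := ht t; rewrite t0 t1 => /(_ isT).
  have -> : t * a - 2^-1 * (t ^+ 2 * c) = 2^-1 * (t * a) * (1 + t).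
    have e : t * c = a - t * a by rewrite -{1}htac; ring.
    rewrite expr2 -[t * t * c]mulrA e; by field.
  have : 0 < t * a by apply: mulr_gt0.
  move=> h1 H.
  have : 0 < 2^-1 * (t * a) * (1 + t).
    by apply: mulr_gt0; [apply: mulr_gt0 => //; lra | lra].
  lra.
have qtht : qf y tht = qf y thetahat + a - 2^-1 * c.
  by rewrite -qfD /w addrC subrK.
split; first exact: part1.
split.
  rewrite /=; apply: le_trans (part1 thetahat).
  rewrite /l Dtht Dhat -EFinD lee_fin qtht.
  have -> : thetahat - tht = - w by rewrite /w opprB.
  rewrite sqnormN -/c; lra.
apply/seteqP; split => th /=; rewrite /l /uGM hq Dtht.
- case: ifP => hle; last by rewrite -EFinD leeNy_eq => /eqP.
  have e := qfD y th (tht - th); rewrite addrC subrK in e.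
  have e2 : th - tht = - (tht - th) by rewrite opprB.
  rewrite -EFinD lee_fin e e2 sqnormN (dotvC (tht - th)) => H; split => //; lra.
- case: ifP => hle; last by move=> [].
  have e := qfD y th (tht - th); rewrite addrC subrK in e.
  have e2 : th - tht = - (tht - th) by rewrite opprB.
  rewrite -EFinD lee_fin e e2 sqnormN (dotvC (tht - th)) => -[_ H]; lra.
Qed.
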